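(* For every integer $d\ge 0$ there is a simplicial complex $\Delta$ with $\mathrm{ctd}(\Delta)\ge d$.
   Context: Given convex polytopes $P_1,\dots,P_n\subset\mathbb{R}^d$ each containing the origin and a point $\mu\in\mathbb{R}^d$, write $P_\sigma=\sum_{i\in\sigma}P_i$ (Minkowski sum) for $\sigma\subseteq[n]$, with $P_\emptyset=\{0\}$; the Minkowski complex $\Delta(\mathcal{P};\mu)$ is the simplicial complex on vertex set $[n]$ whose faces are the $\sigma\subseteq[n]$ with $\mu\notin P_\sigma$. The convex threshold dimension $\mathrm{ctd}(\Delta)$ of a simplicial complex $\Delta$ on vertex set $[n]$ is the smallest $d$ such that $\Delta=\Delta(\mathcal{P};\mu)$ for some family $\mathcal{P}=(P_1,\dots,P_n)$ of convex bodies (equivalently, convex polytopes) in $\mathbb{R}^d$ containing the origin and some $\mu\in\mathbb{R}^d$; this is finite for every simplicial complex. *)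

(* Defs.v *)
From HB Require Import structures.
From mathcomp Require Import all_boot all_order all_algebra.
From mathcomp Require Import reals.
Set Implicit Arguments. Unset Strict Implicit. Unset Printing Implicit Defensive.
Import Order.TTheory GRing.Theory Num.Theory.
Local Open Scope ring_scope.

Definition simplicial_complex (n : nat) (D : {set {set 'I_n}}) : Prop :=
  forall s t : {set 'I_n}, s \in D -> t \subset s -> t \in D.

Definition in_conv (R : realType) (e : nat) (V : seq 'rV[R]_e) (x : 'rV[R]_e) : Prop :=
  exists w : 'I_(size V) -> R,
    (forall j, 0 <= w j) /\ \sum_j w j = 1 /\ \sum_j w j *: nth 0 V j = x.

Definition in_msum (R : realType) (e n : nat) (P : 'I_n -> seq 'rV[R]_e)
    (s : {set 'I_n}) (x : 'rV[R]_e) : Prop :=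
  exists y : 'I_n -> 'rV[R]_e,
    (forall i, i \in s -> in_conv (P i) (y i)) /\ \sum_(i in s) y i = x.

Definition is_minkowski_complex (R : realType) (e n : nat)
    (P : 'I_n -> seq 'rV[R]_e) (mu : 'rV[R]_e) (D : {set {set 'I_n}}) : Prop :=
  forall s : {set 'I_n}, s \in D <-> ~ in_msum P s mu.

Definition realizable (R : realType) (n : nat) (D : {set {set 'I_n}}) (e : nat) : Prop :=
  exists (P : 'I_n -> seq 'rV[R]_e) (mu : 'rV[R]_e),
    (forall i, in_conv (P i) 0) /\ is_minkowski_complex P mu D.

(* Main.v *)
Require Import Defs.
From HB Require Import structures.
From mathcomp Require Import all_boot all_order all_algebra.
From mathcomp Require Import reals.
From Stdlib Require Import Classical ClassicalEpsilon.
Set Implicit Arguments. Unset Strict Implicit. Unset Printing Implicit Defensive.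
Import Order.TTheory GRing.Theory Num.Theory.

Section Aux.
Local Open Scope ring_scope.
Variable R : realType.

Lemma conv_scale e (V : seq 'rV[R]_e) x t :
  in_conv V 0 -> in_conv V x -> 0 <= t -> t <= 1 -> in_conv V (t *: x).
Proof.
move=> [w1 [w1p [w1s w1x]]] [w2 [w2p [w2s w2x]]] t0 t1.
exists (fun j => t * w2 j + (1 - t) * w1 j); split; [|split].
- move=> j; apply: addr_ge0; apply: mulr_ge0 => //; by rewrite subr_ge0.
- by rewrite big_split /= -!mulr_sumr w1s w2s !mulr1 addrC subrK.
- under eq_bigr => j _ do rewrite scalerDl -!scalerA.
  by rewrite big_split /= -!scaler_sumr w1x w2x scaler0 addr0.
Qed.

Lemma term_le_sum n (F : 'I_n -> R) j0 :
  (forall j, 0 <= F j) -> F j0 <= \sum_j F j.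
Proof.
move=> H; rewrite (bigD1 j0) //= lerDl; apply: sumr_ge0 => j _; exact: H.
Qed.

Definition Npos n (lam : 'I_n -> R) := \sum_j (if 0 < lam j then lam j else 0).
Definition Nneg n (lam : 'I_n -> R) := \sum_j (if 0 < lam j then 0 else - lam j).

Lemma Npos_opp n (lam : 'I_n -> R) : Npos (fun j => - lam j) = Nneg lam.
Proof.
apply: eq_bigr => j _; rewrite oppr_gt0.
case: (ltrgtP (lam j) 0) => h //; by rewrite h oppr0.
Qed.

Lemma Nneg_opp n (lam : 'I_n -> R) : Nneg (fun j => - lam j) = Npos lam.
Proof.
apply: eq_bigr => j _; rewrite oppr_gt0 opprK.
case: (ltrgtP (lam j) 0) => h //; by rewrite h oppr0.
Qed.

Lemma split_l m n (j : 'I_m) : split (lshift n j) = inl j.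
Proof. exact: (unsplitK (inl _ j)). Qed.
Lemma split_r m n (j : 'I_n) : split (rshift m j) = inr j.
Proof. exact: (unsplitK (inr _ j)). Qed.

End Aux.

Definition Dcross (d : nat) : {set {set 'I_(d + d)}} :=
  [set s : {set 'I_(d + d)} |
     [forall j : 'I_d, ~~ ((lshift d j \in s) && (rshift d j \in s))]].

Section Key.
Local Open Scope ring_scope.
Variable R : realType.

Lemma key d e (P : 'I_(d + d) -> seq 'rV[R]_e) (mu : 'rV[R]_e)
  (p : 'I_d -> 'rV[R]_e) (lam : 'I_d -> R) (j0 : 'I_d) :
  (forall i, in_conv (P i) 0) ->
  (forall j, in_conv (P (lshift d j)) (p j)) ->
  (forall j, in_conv (P (rshift d j)) (mu - p j)) ->
  \sum_j lam j *: p j = 0 -> lam j0 != 0 -> Npos lam <= Nneg lam ->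
  exists s, s \in Dcross d /\ in_msum P s mu.
Proof.
move=> H0 Hl Hr Hsum Hj0 Hle.
set N := Nneg lam.
have HposF : forall j, 0 <= (if 0 < lam j then lam j else 0).
  by move=> j; case: ifP => // /ltW.
have HnegF : forall j, 0 <= (if 0 < lam j then 0 else - lam j).
  by move=> j; case: ifP => // /negbT; rewrite -leNgt oppr_ge0.
have lePos : forall j, 0 < lam j -> lam j <= N.
  move=> j hj; apply: le_trans Hle.
  by have := term_le_sum j HposF; rewrite hj.
have leNeg : forall j, ~~ (0 < lam j) -> - lam j <= N.
  by move=> j hj; have := term_le_sum j HnegF; rewrite (negbTE hj).
have Npos0 : 0 < N.
  case: (ltrgtP (lam j0) 0) => h.
  - apply: (lt_le_trans _ (leNeg j0 _)); first by rewrite oppr_gt0.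
    by rewrite -leNgt ltW.
  - exact: lt_le_trans h (lePos _ h).
  - by rewrite h eqxx in Hj0.
pose s := [set i : 'I_(d + d) | match split i with
            | inl j => 0 < lam j | inr j => ~~ (0 < lam j) end].
pose y := fun i : 'I_(d + d) => match split i with
            | inl j => if 0 < lam j then (lam j / N) *: p j else 0
            | inr j => if 0 < lam j then 0 else (- lam j / N) *: (mu - p j) end.
exists s; split.
  rewrite inE; apply/forallP => j; rewrite !inE split_l split_r.
  by case: (0 < lam j).
exists y; split.
  move=> i _; rewrite /y -(splitK i); case: (split i) => j; rewrite unsplitK /=.
  - case: ifP => hj; last exact: H0.
    apply: conv_scale => //; first by rewrite divr_ge0 // ?(ltW hj) ?ltW.
    by rewrite ler_pdivrMr // mul1r lePos.
  - case: ifP => hj; first exact: H0.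
    apply: conv_scale => //.
      by rewrite divr_ge0 ?(ltW Npos0) // oppr_ge0 leNgt hj.
    by rewrite ler_pdivrMr // mul1r leNeg // hj.
have -> : \sum_(i in s) y i = \sum_i y i.
  rewrite big_mkcond; apply: eq_bigr => i _; case: ifP => // /negbT.
  rewrite inE /y; case: (split i) => j.
    by move=> /negbTE ->.
  by rewrite negbK => ->.
rewrite big_split_ord /=.
have -> : \sum_j y (lshift d j) + \sum_j y (rshift d j) =
   \sum_j ((lam j / N) *: p j + (if 0 < lam j then 0 else - lam j / N) *: mu).
  rewrite -big_split /=; apply: eq_bigr => j _; rewrite /y split_l split_r.
  case: ifP => hj; first by rewrite scale0r !addr0.
  by rewrite add0r scalerBr mulNr !scaleNr opprK addrC.
rewrite big_split /= -scaler_suml.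
have -> : \sum_j (lam j / N) *: p j = N^-1 *: \sum_j lam j *: p j.
  rewrite scaler_sumr; apply: eq_bigr => j _; by rewrite scalerA mulrC.
rewrite Hsum scaler0 add0r.
have HN : N != 0 by rewrite gt_eqF.
have -> : \sum_i (if 0 < lam i then 0 else - lam i / N) = 1.
  rewrite -(divff HN) {1 3}/N /Nneg mulr_suml; apply: eq_bigr => j _.
  by case: ifP => _ //; rewrite mul0r.
by rewrite scale1r.
Qed.
End Key.

Theorem corollary4 (R : realType) (d : nat) :
  exists (n : nat) (D : {set {set 'I_n}}),
    simplicial_complex D /\ forall e : nat, realizable R D e -> (d <= e)%N.
Proof.
exists (d + d), (Dcross d); split.
  move=> s t; rewrite !inE => /forallP Hs Hst; apply/forallP => j.
  apply: contra (Hs j) => /andP[a b].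
  by rewrite (subsetP Hst _ a) (subsetP Hst _ b).
move=> e [P [mu [H0 HD]]]; rewrite leqNgt; apply/negP => Hed.
have Hp : forall j, exists q, in_conv (P (lshift d j)) q /\
                          in_conv (P (rshift d j)) (mu - q).
  move=> j.
  have : in_msum P [set lshift d j; rshift d j] mu.
    apply: NNPP => Hn; have := proj2 (HD _) Hn.
    rewrite inE => /forallP /(_ j).
    by rewrite !in_set2 !eqxx /= orbT.
  move=> [y [Hy Hs]]; exists (y (lshift d j)); split.
    by apply: Hy; rewrite in_set2 eqxx.
  have -> : (mu - y (lshift d j) = y (rshift d j))%R.
    rewrite -Hs big_setU1 /=; last by rewrite in_set1 eq_lrshift.
    by rewrite big_set1 addrC addrK.
  by apply: Hy; rewrite in_set2 eqxx orbT.
pose p := fun j => proj1_sig (constructive_indefinite_description _ (Hp j)).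
have Hpl : forall j, in_conv (P (lshift d j)) (p j).
  by move=> j; rewrite /p; case: constructive_indefinite_description => q [].
have Hpr : forall j, in_conv (P (rshift d j)) (mu - p j)%R.
  by move=> j; rewrite /p; case: constructive_indefinite_description => q [].
pose M : 'M[R]_(d, e) := (\matrix_(j < d) p j)%R.
have HK : (kermx M != 0)%R.
  rewrite kermx_eq0 /row_free; apply/negP => /eqP Hr.
  by have := rank_leq_col M; rewrite Hr leqNgt Hed.
have [i Hi] : exists i, (row i (kermx M) != 0)%R.
  apply: NNPP => Hn; move/eqP: HK; apply; apply/row_matrixP => i.
  rewrite row0; apply/eqP/negPn/negP => H; apply: Hn; by exists i.
set l := row i (kermx M).
have Hl0 : (l *m M = 0)%R by rewrite /l -row_mul mulmx_ker row0.
have Hsum : (\sum_j l 0 j *: p j = 0)%R.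
  rewrite -[RHS]Hl0 mulmx_sum_row; apply: eq_bigr => j _; by rewrite rowK.
have [j0 Hj0] : exists j, (l 0 j != 0)%R.
  apply: NNPP => Hn; move/eqP: Hi; apply; apply/rowP => j.
  case: (eqVneq (l 0 j)%R 0%R) => [->|H]; first by rewrite mxE.
  by exfalso; apply: Hn; exists j.
case: (boolP (Npos (fun j => l 0 j) <= Nneg (fun j => l 0 j))%R) => Hle.
  have [s [Hs Hm]] := key H0 Hpl Hpr Hsum Hj0 Hle.
  exact: (proj1 (HD s) Hs Hm).
have Hsum' : (\sum_j (- l 0 j) *: p j = 0)%R.
  under eq_bigr => j _ do rewrite scaleNr.
  by rewrite sumrN Hsum oppr0.
have Hj0' : (- l 0 j0 != 0)%R by rewrite oppr_eq0.
have Hle' : (Npos (fun j => - l 0 j) <= Nneg (fun j => - l 0 j))%R.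
  by rewrite Npos_opp Nneg_opp; apply: ltW; rewrite ltNge.
have [s [Hs Hm]] := key H0 Hpl Hpr Hsum' Hj0' Hle'.
exact: (proj1 (HD s) Hs Hm).
Qed.
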